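(* Let $G=(V,E)$ be a graph and $v\in V$. Suppose that $G$ is $\mathcal{R}_d$-closed, $\deg_G(v)=k\geq d+1$, and $G$ contains no $K_{d+2}$ as a subgraph. Then $$\mathrm{rc}^*_d(G,v)\geq d+1-\frac{1}{k+1}\binom{d+2}{2}.$$
   Context: $r_d$ is the rank function of the $d$-dimensional generic rigidity matroid $\mathcal{R}_d$ (linear independence of rows of the rigidity matrix of a generic $d$-dimensional framework); $r_d(H)$ is the rank of $E(H)$. $G$ is $\mathcal{R}_d$-closed if $r_d(G+uv)=r_d(G)+1$ for every non-adjacent pair $u,v$. Let $\pi$ be a uniformly random ordering of $V$, $T_v^\pi$ the set of vertices preceding $v$ in $\pi$, $E_v$ the set of edges incident with $v$, and $E_v^\pi=\{vu\in E_v:u\in T_v^\pi\}$. Define $\mathrm{rc}^*_d(G,v,\pi)=r_d(G-E_v+E_v^\pi)-r_d(G-v)$ and $\mathrm{rc}^*_d(G,v)=\mathbb{E}(\mathrm{rc}^*_d(G,v,\pi))$. *)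

(* Defs.v *)
From HB Require Import structures.
From mathcomp Require Import all_boot all_order all_algebra all_fingroup.
From mathcomp Require Import boolp reals.
Set Implicit Arguments. Unset Strict Implicit. Unset Printing Implicit Defensive.
Import Order.TTheory GRing.Theory Num.Theory.
Local Open Scope ring_scope.

Section Rigidity.
Variables (R : realType) (T : finType) (d : nat).

(* Rows are indexed by ordered pairs (a,b);
   the row of (a,b) is zero unless F a b, in which case it is the usual row
   (p a - p b at the block of a, p b - p a at the block of b).  Each undirected
   edge thus appears twice (once negated), which does not change the rank. *)
Definition rigmx (F : rel T) (p : T -> 'rV[R]_d) :
  'M[R]_(#|{: T * T}|, #|{: T * 'I_d}|) :=
  \matrix_(i, j)
    let ab := enum_val i in let wk := enum_val j in
    if F ab.1 ab.2 then
      (if wk.1 == ab.1 then p ab.1 0 wk.2 - p ab.2 0 wk.2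
       else if wk.1 == ab.2 then p ab.2 0 wk.2 - p ab.1 0 wk.2 else 0)
    else 0.

(* d-dimensional generic rigidity matroid rank r_d(F): the rank of the
   rigidity matrix at a generic placement, i.e. the maximum over all
   placements p : T -> R^d. *)
Definition rd (F : rel T) : nat :=
  (\max_(n < #|{: T * T}|.+1 | `[< exists p, \rank (rigmx F p) = n >]) n)%N.

End Rigidity.

Section Graphs.
Variable T : finType.

Definition add_edge (e : rel T) (u v : T) : rel T :=
  fun a b => e a b || ((a == u) && (b == v)) || ((a == v) && (b == u)).

Definition del_vertex (e : rel T) (v : T) : rel T :=
  fun a b => [&& e a b, a != v & b != v].

Definition precedes (s : {perm T}) (u v : T) : bool :=
  (enum_rank (s u) < enum_rank (s v))%N.

Definition keep_earlier (e : rel T) (v : T) (s : {perm T}) : rel T :=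
  fun a b => e a b &&
    (if a == v then precedes s b v else if b == v then precedes s a v else true).

Definition deg (e : rel T) (v : T) : nat := #|[set u | e v u]|.

Definition Rd_closed (R : realType) (d : nat) (e : rel T) : Prop :=
  forall u v : T, u != v -> ~~ e u v ->
    rd R d (add_edge e u v) = (rd R d e).+1.

Definition has_Kn_subgraph (e : rel T) (n : nat) : Prop :=
  exists S : {set T}, #|S| = n /\
    {in S &, forall a b, a != b -> e a b}.

Definition rcstar_pi (R : realType) (d : nat) (e : rel T) (v : T)
  (s : {perm T}) : nat :=
  (rd R d (keep_earlier e v s) - rd R d (del_vertex e v))%N.

Definition rcstar (R : realType) (d : nat) (e : rel T) (v : T) : R :=
  (\sum_(s : {perm T}) (rcstar_pi R d e v s)%:R) / (#|{perm T}|)%:R.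

End Graphs.

(* Main.v *)
Require Import Defs.
From HB Require Import structures.
From mathcomp Require Import all_boot all_order all_algebra all_fingroup.
From mathcomp Require Import boolp reals.
From mathcomp Require Import ring lra zify.
Set Implicit Arguments. Unset Strict Implicit. Unset Printing Implicit Defensive.
Import Order.TTheory GRing.Theory Num.Theory.
Local Open Scope ring_scope.

Section Rig.
Variables (R : realType) (T : finType) (d : nat).
Notation pl := (T -> 'rV[R]_d).

Lemma rank_le_rd (F : rel T) (p : pl) : (\rank (rigmx F p) <= rd R d F)%N.
Proof.
have lt : (\rank (rigmx F p) < #|{: T * T}|.+1)%N by rewrite ltnS rank_leq_row.
rewrite /rd; apply: (leq_bigmax_cond (Ordinal lt)) => /=.
by apply/asboolP; exists p.
Qed.

Lemma rd_attained (F : rel T) : exists p : pl, \rank (rigmx F p) = rd R d F.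
Proof.
have lt : (\rank (rigmx F (fun _ : T => (0%R : 'rV[R]_d))) < #|{: T * T}|.+1)%N by rewrite ltnS rank_leq_row.
have P0 : `[< exists p : pl, \rank (rigmx F p) = Ordinal lt >].
  by apply/asboolP; exists (fun _ : T => (0%R : 'rV[R]_d)).
rewrite /rd (bigop.bigmax_eq_arg (Ordinal lt) P0).
case: arg_maxnP => // i /asboolP [p hp] _.
by exists p.
Qed.
End Rig.

Section Gen.
Variables (R : realType) (T : finType) (d : nat).
Notation pl := (T -> 'rV[R]_d).

Lemma ebase_sel m n (C : 'M[R]_(m, n)) r : (r <= \rank C)%N ->
  exists X : 'M_(r, m), exists Y : 'M_(n, r), X *m C *m Y = 1%:M.
Proof.
move=> hr.
exists ((pid_mx r : 'M_(r, m)) *m invmx (col_ebase C)).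
exists (invmx (row_ebase C) *m (pid_mx r : 'M_(n, r))).
have hr0 := rank_leq_row C.
rewrite -[X in _ *m X *m _](mulmx_ebase C) !mulmxA mulmxKV ?col_ebase_unit //.
rewrite -!mulmxA mulKVmx ?row_ebase_unit // mulmxA !mul_pid_mx -pid_mx_1.

have h1 := rank_leq_row C; have h2 := rank_leq_col C.
congr pid_mx; lia.
Qed.

Lemma poly_nonroot (q : {poly R}) : q != 0 -> exists t : R, q.[t] != 0.
Proof.
move=> q0; apply/not_existsP => H.
have h1 : all (root q) [seq i%:R | i <- iota 0 (size q)].
  apply/allP => x /mapP [i _ ->]; apply/rootP.
  by case: (eqVneq q.[i%:R] 0) => // hh; case: (H (i%:R)).
have h2 : uniq [seq (i%:R : R) | i <- iota 0 (size q)].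
  rewrite map_inj_uniq ?iota_uniq //; exact: (mulrIn (oner_neq0 R)).
by have := max_poly_roots q0 h1 h2; rewrite size_map size_iota ltnn.
Qed.

Lemma key m n (A B : 'M[R]_(m, n)) r : (r <= \rank A)%N \/ (r <= \rank B)%N ->
  exists2 q : {poly R}, q != 0 &
    forall t, q.[t] != 0 -> (r <= \rank ((1 - t) *: A + t *: B)%R)%N.
Proof.
move=> h.
have [X [Y hXY]] : exists X : 'M_(r, m), exists Y : 'M_(n, r),
    X *m A *m Y = 1%:M \/ X *m B *m Y = 1%:M.
  case: h => /ebase_sel [X [Y h]]; exists X, Y; by [left|right].
pose Pm := \matrix_(i, j) ((1 - 'X) * ((X *m A *m Y) i j)%:P
                           + 'X * ((X *m B *m Y) i j)%:P).
have ev t : map_mx (horner_eval t) Pm = X *m ((1 - t) *: A + t *: B) *m Y.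
  rewrite mulmxDr mulmxDl -!scalemxAr -!scalemxAl.
  apply/matrixP => i j; rewrite !mxE /= horner_evalE.
  by rewrite !hornerE.
have evd t : (\det Pm).[t] = \det (X *m ((1 - t) *: A + t *: B) *m Y).
  by rewrite -ev det_map_mx /= horner_evalE.
exists (\det Pm).
  apply/eqP => P0.
  case: hXY => hh.
    have := evd 0; rewrite P0 horner0 subr0 scale1r scale0r addr0 hh det1.
    by move/eqP; rewrite eq_sym oner_eq0.
  have := evd 1; rewrite P0 horner0 subrr scale1r scale0r add0r hh det1.
  by move/eqP; rewrite eq_sym oner_eq0.
move=> t; rewrite evd => hd.
have U : X *m ((1 - t) *: A + t *: B) *m Y \in unitmx by rewrite unitmxE unitfE.
have E : (invmx (X *m ((1 - t) *: A + t *: B) *m Y) *m X) *m ((1 - t) *: A + t *: B) *m Y = 1%:M.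
  by rewrite -!mulmxA [X *m (_ *m Y)]mulmxA mulVmx.
exact: (mulmx1_min_rank E).
Qed.

Definition comb (t : R) (p1 p2 : pl) : pl := fun x => (1 - t) *: p1 x + t *: p2 x.

Definition Zopen (P : pl -> Prop) := forall p1 p2, P p1 \/ P p2 ->
  exists2 q : {poly R}, q != 0 & forall t, q.[t] != 0 -> P (comb t p1 p2).

Definition lin m n (M : pl -> 'M[R]_(m, n)) :=
  forall t p1 p2, M (comb t p1 p2) = (1 - t) *: M p1 + t *: M p2.

Lemma Zopen_rank m n (M : pl -> 'M[R]_(m, n)) r : lin M ->
  Zopen (fun p => (r <= \rank (M p))%N).
Proof.
move=> hM p1 p2 h; have [q q0 hq] := key h.
by exists q => // t /hq; rewrite hM.
Qed.

Lemma ZopenI P Q : Zopen P -> Zopen Q -> Zopen (fun p => P p /\ Q p).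
Proof.
move=> hP hQ p1 p2 h.
have [qP qP0 HP] : exists2 q : {poly R}, q != 0 & forall t, q.[t] != 0 -> P (comb t p1 p2).
  by apply: hP; case: h => [[]|[]]; auto.
have [qQ qQ0 HQ] : exists2 q : {poly R}, q != 0 & forall t, q.[t] != 0 -> Q (comb t p1 p2).
  by apply: hQ; case: h => [[]|[]]; auto.
exists (qP * qQ); first by rewrite mulf_neq0.
by move=> t; rewrite hornerM mulf_eq0 negb_or => /andP [a b]; split; [apply: HP|apply: HQ].
Qed.

Lemma Zopen_ex P Q : Zopen P -> Zopen Q -> (exists p, P p) -> (exists p, Q p) ->
  exists p, P p /\ Q p.
Proof.
move=> hP hQ [p1 h1] [p2 h2].
have [qP qP0 HP] := hP p1 p2 (or_introl h1).
have [qQ qQ0 HQ] := hQ p1 p2 (or_intror h2).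
have [t ht] := poly_nonroot (mulf_neq0 qP0 qQ0).
move: ht; rewrite hornerM mulf_eq0 negb_or => /andP [a b].
by exists (comb t p1 p2); split; [apply: HP|apply: HQ].
Qed.

Lemma lin_rig (F : rel T) : lin (fun p => rigmx F p).
Proof.
move=> t p1 p2; apply/matrixP => i j; rewrite !mxE /comb.
case: ifP => _; last by rewrite !mulr0 addr0.
case: ifP => _; first by rewrite !mxE; ring.
case: ifP => _; first by rewrite !mxE; ring.
by rewrite !mulr0 addr0.
Qed.

Lemma lin_mulr m n k (M : pl -> 'M[R]_(m, n)) (P : 'M[R]_(n, k)) :
  lin M -> lin (fun p => M p *m P).
Proof. by move=> h t p1 p2; rewrite h mulmxDl -!scalemxAl. Qed.

Lemma lin_comp m n (M : pl -> 'M[R]_(m, n)) (u : pl -> pl) :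
  lin M -> (forall t p1 p2, u (comb t p1 p2) = comb t (u p1) (u p2)) ->
  lin (fun p => M (u p)).
Proof. by move=> h hu t p1 p2 /=; rewrite hu h. Qed.

End Gen.

Section Rig2.
Variables (R : realType) (T : finType) (d : nat).
Notation pl := (T -> 'rV[R]_d).
Notation NR := #|{: T * T}|.
Notation NC := #|{: T * 'I_d}|.

Definition rv (p : pl) (x y : T) : 'rV[R]_NC :=
  \row_j (let wk := enum_val j in
    if wk.1 == x then p x 0 wk.2 - p y 0 wk.2
    else if wk.1 == y then p y 0 wk.2 - p x 0 wk.2 else 0).

Lemma row_rig (F : rel T) (p : pl) i :
  row i (rigmx F p) = if F (enum_val i).1 (enum_val i).2
                      then rv p (enum_val i).1 (enum_val i).2 else 0.
Proof.
apply/rowP => j; rewrite !mxE /=. case: ifP => h. rewrite !mxE. done. rewrite !mxE. done.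
Qed.

Lemma rv_sub (F : rel T) (p : pl) x y : F x y -> (rv p x y <= rigmx F p)%MS.
Proof.
move=> h; have := row_sub (enum_rank (x, y)) (rigmx F p).
by rewrite row_rig enum_rankK /= h.
Qed.

Lemma rig_subP m (F : rel T) (p : pl) (M : 'M[R]_(m, NC)) :
  (forall x y, F x y -> (rv p x y <= M)%MS) -> (rigmx F p <= M)%MS.
Proof.
move=> h; apply/row_subP => i; rewrite row_rig.
case: ifP => hF; [exact: h | exact: sub0mx].
Qed.

Lemma rig_mono (F F' : rel T) (p : pl) : (forall x y, F x y -> F' x y) ->
  (rigmx F p <= rigmx F' p)%MS.
Proof. by move=> h; apply: rig_subP => x y /h; apply: rv_sub. Qed.

Lemma rig_upd (F : rel T) (v : T) (p q : pl) :
  (forall x y, F x y -> (x != v) && (y != v)) ->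
  (forall x, x != v -> q x = p x) -> rigmx F q = rigmx F p.
Proof.
move=> hF hq; apply/matrixP => i j; rewrite !mxE.
rewrite /=; case: ifP => // hh; have /andP [h1 h2] := hF _ _ hh.
by rewrite !hq.
Qed.

Definition Pv (v : T) : 'M[R]_NC :=
  diag_mx (\row_j (if (enum_val j).1 == v then 1 else 0)).

Lemma rig_Pv0 (F : rel T) (v : T) (p : pl) :
  (forall x y, F x y -> (x != v) && (y != v)) -> rigmx F p *m Pv v = 0.
Proof.
move=> hF; rewrite /Pv mul_mx_diag; apply/matrixP => i j; rewrite !mxE /=.
case: ifP => [hh|]; last by rewrite mul0r.
have /andP [h1 h2] := hF _ _ hh.
case: (eqVneq (enum_val j).1 v) => [->|]; last by rewrite mulr0.
by rewrite eq_sym (negbTE h1) eq_sym (negbTE h2) mul0r.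
Qed.

Lemma rank_split m1 m2 (X : 'M[R]_(m1, NC)) (A : 'M[R]_(m2, NC)) v :
  (A <= X)%MS -> A *m Pv v = 0 ->
  (\rank (X *m Pv v) + \rank A <= \rank X)%N.
Proof.
move=> hAX hA0; rewrite -(mxrank_mul_ker X (Pv v)) leq_add2l.
by apply: mxrankS; rewrite sub_capmx hAX sub_kermx hA0 eqxx.
Qed.

Lemma sum_delta n (r0 : 'I_n) (f : 'I_n -> R) :
  \sum_r ((r == r0)%:R * f r) = f r0.
Proof.
rewrite (bigD1 r0) //= eqxx mul1r big1 ?addr0 // => r /negbTE ->.
by rewrite mul0r.
Qed.

Lemma sum_delta' n (r0 : 'I_n) (f : 'I_n -> R) :
  \sum_r (f r * (r == r0)%:R) = f r0.
Proof.
rewrite (bigD1 r0) //= eqxx mulr1 big1 ?addr0 // => r /negbTE ->.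
by rewrite mulr0.
Qed.

Lemma select_rank (F : rel T) (q : pl) (v : T) (S : {set T}) (sg : T -> nat) :
  (forall x, x \in S -> F v x) ->
  (forall x, x \in S -> (sg x < d)%N) ->
  {in S &, injective sg} ->
  (forall x, x \in S -> forall k : 'I_d, q v 0 k - q x 0 k = (k == sg x :> nat)%:R) ->
  (#|S| <= \rank (rigmx F q *m Pv v))%N.
Proof.
move=> hF hsg hinj hq.
pose xs (i : 'I_#|S|) : T := enum_val i.
have xsS i : xs i \in S by exact: enum_valP.
pose kk (i : 'I_#|S|) : 'I_d := Ordinal (hsg _ (xsS i)).
pose Xs : 'M[R]_(#|S|, NR) := \matrix_(i, r) (r == enum_rank (v, xs i))%:R.
pose Ys : 'M[R]_(NC, #|S|) := \matrix_(c, i) (c == enum_rank (v, kk i))%:R.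
apply: (@mulmx1_min_rank _ _ _ _ _ Xs Ys).
rewrite /Pv mul_mx_diag.
apply/matrixP => i i'; rewrite !mxE.
under eq_bigr do rewrite !mxE.
rewrite sum_delta'.
under eq_bigr do rewrite !mxE.
rewrite sum_delta !enum_rankK /= eqxx mulr1 hF // hq //=.
congr (_%:R); case: (eqVneq i i') => [->|hne]; first by rewrite eqxx.
case: eqP => // h; case/eqP: hne.
by apply: enum_val_inj; apply: hinj; rewrite ?xsS.
Qed.

End Rig2.

Section Main.
Variables (R : realType) (T : finType) (d : nat).
Notation pl := (T -> 'rV[R]_d).

Lemma mid_rv (q : pl) (v x y : T) : x != y -> x != v -> y != v ->
  q v = 2^-1 *: (q x + q y) ->
  rv q x y = 2 *: (rv q v x + rv q v y).
Proof.
move=> xy xv yv hv; apply/rowP => j; rewrite !mxE /=.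
have h2 : (2 : R) != 0 by rewrite pnatr_eq0.
have hvk k : q v 0 k = 2^-1 * (q x 0 k + q y 0 k) by rewrite hv !mxE.
rewrite /=. move: (enum_val j) => [w k] /=.
have hk := hvk k.
have yx : y != x by rewrite eq_sym.
have vx : v != x by rewrite eq_sym.
have vy : v != y by rewrite eq_sym.
case: (eqVneq w x) => [?|wx]; first try subst.
  rewrite ?eqxx ?(negbTE xv) ?(negbTE xy) hk; by field.
case: (eqVneq w y) => [?|wy]; first try subst.
  rewrite ?eqxx ?(negbTE yv) ?(negbTE yx) hk; by field.
case: (eqVneq w v) => [?|wv]; last by rewrite addr0 mulr0.
try subst; rewrite ?eqxx ?(negbTE vx) ?(negbTE vy) hk; by field.
Qed.

Definition ev (k : nat) : 'rV[R]_d := \row_j (j == k :> nat)%:R.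

Lemma caseA (e : rel T) (e_irr : irreflexive e) (v : T) (s : {perm T}) :
  let S := [set u | e v u && precedes s u v] in
  (#|S| <= d)%N ->
  (rd R d (del_vertex e v) + #|S| <= rd R d (keep_earlier e v s))%N.
Proof.
move=> S hS.
set H0 := del_vertex e v; set K := keep_earlier e v s.
have Z1 := Zopen_rank (r := rd R d H0) (lin_rig (R:=R) (d:=d) H0).
have Z2 := Zopen_rank (r := #|S|) (lin_mulr (Pv R d v) (lin_rig (R:=R) (d:=d) K)).
have [p1 hp1] := rd_attained R d H0.
have SK x : x \in S -> K v x.
  by rewrite inE /K /keep_earlier eqxx => /andP [-> ->].
have Sv x : x \in S -> x != v.
  rewrite inE => /andP [h _]; apply/eqP => xv; move: h; by rewrite xv e_irr.
pose sg x := index x (enum S).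
have E2 : exists p : pl, (#|S| <= \rank (rigmx K p *m Pv R d v))%N.
  exists (fun x => if x == v then 0 else - ev (sg x)).
  apply: (select_rank (sg := sg)) => //.
  - move=> x xS; apply: leq_trans hS; by rewrite cardE /sg index_mem mem_enum.
  - move=> x y xS yS; apply: (index_inj x); by rewrite mem_enum.
  - move=> x xS k; rewrite eqxx (negbTE (Sv x xS)) !mxE; ring.
have [p [h1 h2]] := Zopen_ex Z1 Z2 (ex_intro _ p1 (eq_leq (esym hp1))) E2.
apply: leq_trans (rank_le_rd K p).
rewrite addnC; apply: leq_trans (rank_split (v:=v) (A := rigmx H0 p) _ _).
- by apply: leq_add.
- apply: rig_mono => x y; rewrite /H0 /K /del_vertex /keep_earlier.
  by case/and3P => -> /negbTE -> /negbTE ->.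
- apply: rig_Pv0 => x y; rewrite /H0 /del_vertex; by case/and3P => _ -> ->.
Qed.


Lemma caseB (e : rel T) (e_sym : symmetric e) (e_irr : irreflexive e) (v : T)
  (s : {perm T}) :
  Rd_closed R d e -> ~ has_Kn_subgraph e d.+2 ->
  let S := [set u | e v u && precedes s u v] in
  (d.+1 <= #|S|)%N ->
  (rd R d (del_vertex e v) + d.+1 <= rd R d (keep_earlier e v s))%N.
Proof.
move=> hcl hK S hS.
set H0 := del_vertex e v; set K := keep_earlier e v s.
have SK x : x \in S -> K v x.
  by rewrite inE /K /keep_earlier eqxx => /andP [-> ->].
have Sv x : x \in S -> x != v.
  rewrite inE => /andP [h _]; apply/eqP => xv; move: h; by rewrite xv e_irr.
have Se x : x \in S -> e v x by rewrite inE => /andP [].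
have [sq [uq sz sub]] := card_geqP hS.
set N := [set x in sq].
have cN : #|N| = d.+1 by rewrite cardsE (card_uniqP uq).
have NS x : x \in N -> x \in S by rewrite inE => /sub.
have vN : v \notin N by apply/negP => /NS /Sv; rewrite eqxx.
have [a [b [aN bN ab nab]]] :
    exists a b, [/\ a \in N, b \in N, a != b & ~~ e a b].
  case: (pselect (exists a b, [/\ a \in N, b \in N, a != b & ~~ e a b])) => // hn.
  exfalso; apply: hK; exists (v |: N); split.
    by rewrite cardsU1 vN cN.
  move=> x y; rewrite !in_setU1 => /orP [/eqP ->|xN] /orP [/eqP ->|yN] xy.
  - by rewrite eqxx in xy.
  - exact: Se (NS _ yN).
  - by rewrite e_sym; exact: Se (NS _ xN).
  - case: (boolP (e x y)) => // nxy; exfalso; apply: hn; exists x, y; by split.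
have av : a != v by apply: Sv; apply: NS.
have bv : b != v by apply: Sv; apply: NS.
set Sa := N :\ b.
have cSa : #|Sa| = d by move: cN; rewrite (cardsD1 b N) bN add1n => -[].
have SaN x : x \in Sa -> x \in N by rewrite /Sa in_setD1 => /andP [].
have Sab x : x \in Sa -> x != b by rewrite /Sa in_setD1 => /andP [].
have aSa : a \in Sa by rewrite /Sa in_setD1 aN andbT.
pose sg x := index x (enum Sa).
pose mid (p : pl) : pl := fun x => if x == v then 2^-1 *: (p a + p b) else p x.
have hmid t p1 p2 : mid (comb t p1 p2) = comb t (mid p1) (mid p2).
  apply: funext => x; rewrite /mid /comb; case: ifP => _ //.
  apply/rowP => k; rewrite !mxE; ring.
have Z1 := Zopen_rank (r := rd R d e) (lin_rig (R:=R) (d:=d) e).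
have Z2 := Zopen_rank (r := rd R d (add_edge e a b)) (lin_rig (R:=R) (d:=d) (add_edge e a b)).
have Z3 := Zopen_rank (r := rd R d H0) (lin_rig (R:=R) (d:=d) H0).
have Z4 := Zopen_rank (r := d) (lin_comp (lin_mulr (Pv R d v) (lin_rig (R:=R) (d:=d) K)) hmid).
have E1 : exists p : pl, (rd R d e <= \rank (rigmx e p))%N.
  by have [p hp] := rd_attained R d e; exists p; rewrite hp.
have E2 : exists p : pl, (rd R d (add_edge e a b) <= \rank (rigmx (add_edge e a b) p))%N.
  by have [p hp] := rd_attained R d (add_edge e a b); exists p; rewrite hp.
have E3 : exists p : pl, (rd R d H0 <= \rank (rigmx H0 p))%N.
  by have [p hp] := rd_attained R d H0; exists p; rewrite hp.
have E4 : exists p : pl, (d <= \rank (rigmx K (mid p) *m Pv R d v))%N.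
  exists (fun x => if x == b then ev (sg a) else - ev (sg x)).
  rewrite -{1}cSa; apply: (select_rank (sg := sg)).
  - by move=> x /SaN /NS /SK.
  - by move=> x xS; rewrite -cSa cardE /sg index_mem mem_enum.
  - move=> x y xS yS; apply: (index_inj x); by rewrite mem_enum.
  - move=> x xS k; rewrite /mid eqxx (negbTE (Sv x (NS _ (SaN _ xS)))).
    rewrite (negbTE (Sab x xS)) (negbTE ab) eqxx !mxE; ring.
have [p12 [h1 h2]] := Zopen_ex Z1 Z2 E1 E2.
have [p34 [h3 h4]] := Zopen_ex Z3 Z4 E3 E4.
have [p [[h1' h2'] [h3' h4']]] := Zopen_ex (ZopenI Z1 Z2) (ZopenI Z3 Z4)
  (ex_intro _ p12 (conj h1 h2)) (ex_intro _ p34 (conj h3 h4)).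
clear h1 h2 h3 h4.
have re : \rank (rigmx e p) = rd R d e.
  by apply/eqP; rewrite eqn_leq h1' rank_le_rd.
have rab : \rank (rigmx (add_edge e a b) p) = (rd R d e).+1.
  by rewrite -(hcl a b ab nab); apply/eqP; rewrite eqn_leq h2' rank_le_rd.
set H0ab := add_edge H0 a b.
have H0ab_v x y : H0ab x y -> (x != v) && (y != v).
  rewrite /H0ab /add_edge /H0 /del_vertex.
  by case/orP => [/orP [/and3P [_ -> ->] //|]|] /andP [/eqP -> /eqP ->]; rewrite ?av ?bv.
have H0e x y : H0 x y -> e x y by case/and3P.
have H0K x y : H0 x y -> K x y.
  rewrite /H0 /K /del_vertex /keep_earlier.
  by case/and3P => -> /negbTE -> /negbTE ->.
have hlt : (\rank (rigmx H0 p) < \rank (rigmx H0ab p))%N.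
  rewrite ltnNge; apply/negP => hle.
  have sub1 : (rigmx H0 p <= rigmx H0ab p)%MS.
    by apply: rig_mono => x y h; rewrite /H0ab /add_edge h.
  have sub2 : (rigmx H0ab p <= rigmx H0 p)%MS.
    have := (mxrank_leqif_sup sub1).2; rewrite eqn_leq (mxrankS sub1) hle /=.
    by move=> <-.
  have sub3 : (rigmx (add_edge e a b) p <= rigmx e p)%MS.
    apply: rig_subP => x y hxy; case he: (e x y); first exact: rv_sub.
    have hx : H0ab x y.
      move: hxy; rewrite /add_edge he /=.
      by case/orP => /andP [/eqP -> /eqP ->]; rewrite /H0ab /add_edge !eqxx ?orbT.
    apply: submx_trans (rv_sub p hx) _; apply: submx_trans sub2 _.
    exact: rig_mono.
  by have := mxrankS sub3; rewrite rab re ltnn.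
set q := mid p.
have eqH : rigmx H0ab q = rigmx H0ab p.
  by apply: rig_upd H0ab_v _ => x xv; rewrite /q /mid (negbTE xv).
have qv : q v = 2^-1 *: (q a + q b) by rewrite /q /mid eqxx (negbTE av) (negbTE bv).
have subX : (rigmx H0ab q <= rigmx K q)%MS.
  apply: rig_subP => x y hxy; case hH: (H0 x y); first by apply: rv_sub; apply: H0K.
  move: hxy; rewrite /H0ab /add_edge hH /=.
  have aS : a \in S by apply: NS.
  have bS : b \in S by apply: NS.
  case/orP => /andP [/eqP -> /eqP ->].
    rewrite (mid_rv (v := v)) //; apply: scalemx_sub; apply: addmx_sub; apply: rv_sub; exact: SK.
  rewrite (@mid_rv q v b a); [|by rewrite eq_sym|by []|by []|by rewrite addrC].
  apply: scalemx_sub; apply: addmx_sub; apply: rv_sub; exact: SK.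
have P0 : rigmx H0ab q *m Pv R d v = 0 by apply: rig_Pv0 H0ab_v.
have hs := rank_split subX P0.
have hK' := rank_le_rd K q.
rewrite eqH in hs.
move: h3' h4' hlt hs hK'; rewrite /q; lia.
Qed.

End Main.

Local Close Scope ring_scope.

Section Count.
Variables (T : finType) (e : rel T) (v : T).
Hypothesis e_irr : irreflexive e.

Definition W := v |: [set u | e v u].
Definition pos (s : {perm T}) x := #|[set y in W | precedes s y x]|.

Lemma js_pos s : #|[set u | e v u && precedes s u v]| = pos s v.
Proof.
apply: eq_card => y; rewrite !inE.
case: (eqVneq y v) => [->|] /=; first by rewrite e_irr /precedes ltnn.
by [].
Qed.

Lemma vW : v \in W. Proof. by rewrite /W in_setU1 eqxx. Qed.

Lemma cardW k : #|[set u | e v u]| = k -> #|W| = k.+1.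
Proof. by move=> <-; rewrite /W cardsU1 inE e_irr. Qed.

Lemma inW_set (P : pred T) y : (y \in [set z in W | P z]) = (y \in W) && P y.
Proof. exact: in_set. Qed.

Lemma in_pre (f : T -> T) (A : {set T}) y : (y \in f @^-1: A) = (f y \in A).
Proof. exact: in_set. Qed.

Lemma pos_lt s x : x \in W -> (pos s x < #|W|)%N.
Proof.
move=> xW; apply: proper_card; apply/properP; split.
  by apply/subsetP => y; rewrite inE => /andP [].
by exists x => //; rewrite inE /precedes ltnn andbF.
Qed.

Lemma pos_lt2 s x y : x \in W -> precedes s x y -> (pos s x < pos s y)%N.
Proof.
move=> xW hxy; apply: proper_card; apply/properP; split.
  apply/subsetP => z; rewrite !inE => /andP [-> hz] /=.
  by apply: ltn_trans hz hxy.
exists x; first by rewrite inE xW hxy.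
by rewrite inE /precedes ltnn andbF.
Qed.

Lemma pos_inj s : {in W &, injective (pos s)}.
Proof.
move=> x y xW yW hxy; apply/eqP; apply/negP => /negP nxy.
have hne : enum_rank (s x) != enum_rank (s y).
  by apply/negP => /eqP /enum_rank_inj /perm_inj /eqP; apply/negP.
case: (ltngtP (enum_rank (s x)) (enum_rank (s y))) => h.
- by have := pos_lt2 xW h; rewrite hxy ltnn.
- by have := pos_lt2 yW h; rewrite hxy ltnn.
- by move: hne; rewrite (val_inj h) eqxx.
Qed.

Lemma pos_count s j : (j < #|W|)%N -> #|[set w in W | pos s w == j]| = 1.
Proof.
move=> hj.
set n := #|W|.
have hn : (0 < n)%N by apply: leq_ltn_trans hj.
pose f w : 'I_n := Ordinal (ltn_pmod (pos s w) hn).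
have fE w : w \in W -> val (f w) = pos s w by move=> wW; rewrite /= modn_small // pos_lt.
have f_inj : {in W &, injective f}.
  move=> x y xW yW /(congr1 val); rewrite !fE //; exact: pos_inj.
have im : [set f x | x in W] = [set: 'I_n].
  apply/eqP; rewrite eqEcard subsetT /= cardsT card_ord card_in_imset //.
have : Ordinal hj \in [set f x | x in W] by rewrite im inE.
case/imsetP => w wW hw.
have -> : [set w in W | pos s w == j] = [set w].
  apply/setP => y; rewrite in_set in_set1; apply/andP/eqP => [[yW /eqP hy]|->].
    apply: (pos_inj (s:=s) yW wW); rewrite hy.
    by move/(congr1 val): hw; rewrite fE //=.
  by split => //; move/(congr1 val): hw; rewrite fE //= => ->.
by rewrite cards1.
Qed.

Lemma tpermW w y : w \in W -> (tperm v w y \in W) = (y \in W).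
Proof.
move=> wW; case: tpermP => [->|->|//]; by rewrite ?wW ?vW.
Qed.

Lemma pos_swap s w : w \in W -> pos (tperm v w * s)%g v = pos s w.
Proof.
move=> wW; rewrite /pos.
have -> : [set y in W | precedes (tperm v w * s)%g y v] =
          tperm v w @^-1: [set y in W | precedes s y w].
  apply/setP => y; rewrite in_pre !inW_set tpermW // /precedes !permM tpermL.
  by [].
by rewrite card_preimset //; exact: perm_inj.
Qed.

Lemma count_sym w j : w \in W ->
  #|[set s : {perm T} | pos s v == j]| = #|[set s : {perm T} | pos s w == j]|.
Proof.
move=> wW.
have -> : [set s : {perm T} | pos s w == j] =
          (mulg (tperm v w)) @^-1: [set s : {perm T} | pos s v == j].
  by apply/setP => s; rewrite !inE pos_swap.
by rewrite card_preimset //; exact: (mulgI (tperm v w)).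
Qed.

Lemma count_uniform j : (j < #|W|)%N ->
  #|W| * #|[set s : {perm T} | pos s v == j]| = #|{perm T}|.
Proof.
move=> hj.
have E1 : #|W| * #|[set s : {perm T} | pos s v == j]| =
          \sum_(w in W) #|[set s : {perm T} | pos s w == j]|.
  rewrite -sum1_card big_distrl /=; apply: eq_bigr => w wW.
  by rewrite mul1n (count_sym j wW).
rewrite E1.
have E2 : forall w, #|[set s : {perm T} | pos s w == j]| =
                    \sum_(s : {perm T}) (pos s w == j : nat).
  move=> w; rewrite -sum1_card big_mkcond /=; apply: eq_bigr => s _.
  by rewrite inE; case: (pos s w == j).
under eq_bigr do rewrite E2.
rewrite exchange_big /= -sum1_card; apply: eq_bigr => s _.
rewrite -(pos_count s hj) -sum1_card big_mkcond /= [RHS]big_mkcond /=.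
apply: eq_bigr => w _; rewrite inW_set; by case: (w \in W); case: (pos s w == j).
Qed.

End Count.

Lemma sum_id n : (\sum_(j < n) j = 'C(n, 2))%N.
Proof.
elim: n => [|n IH]; first by rewrite big_ord0.
by rewrite big_ord_recr /= IH binS bin1.
Qed.

Lemma bin2_mul n : ('C(n, 2) * 2 = n * n.-1)%N.
Proof.
elim: n => [|n IH] //; rewrite binS bin1 mulnDl IH /=.
case: n IH => [|n] IH //=; lia.
Qed.

Lemma sum_min d m :
  (\sum_(j < (d + m).+1) minn j d.+1 + 'C(d.+2, 2) = (d + m).+1 * d.+1)%N.
Proof.
elim: m => [|m IH].
  rewrite addn0.
  have -> : (\sum_(j < d.+1) minn j d.+1 = \sum_(j < d.+1) j)%N.
    by apply: eq_bigr => j _; apply/minn_idPl; apply: ltnW.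
  rewrite sum_id.
  have h3 : 'C(d.+2, 2) = ('C(d.+1, 2) + d.+1)%N by rewrite binS bin1.
  have h1 := bin2_mul d.+1; simpl in h1; rewrite h3; nia.
rewrite addnS big_ord_recr /= -addnA [(minn _ _ + _)%N]addnC addnA IH.
have -> : minn (d + m).+1 d.+1 = d.+1 by apply/minn_idPr; lia.
lia.
Qed.


Local Open Scope ring_scope.

Theorem lemma3p9 (R : realType) (d : nat) (T : finType) (e : rel T)
  (e_sym : symmetric e) (e_irr : irreflexive e) (v : T) (k : nat) :
  Rd_closed R d e ->
  deg e v = k -> (d.+1 <= k)%N ->
  ~ has_Kn_subgraph e d.+2 ->
  rcstar R d e v >= d.+1%:R - 'C(d.+2, 2)%:R / k.+1%:R.
Proof.
move=> hcl hdeg hk hK.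
have hW : #|W e v| = k.+1 by apply: cardW.
have hposlt s : (pos e v s v < k.+1)%N by rewrite -hW; apply: pos_lt; apply: vW.
have hpt s : (minn (pos e v s v) d.+1 <= rcstar_pi R d e v s)%N.
  rewrite /rcstar_pi -(js_pos v e_irr s).
  case: (leqP #|[set u | e v u & precedes s u v]| d) => h.
    have := caseA R e_irr h.
    by rewrite (minn_idPl (leqW h)); lia.
  have := caseB e_sym e_irr hcl hK h.
  by rewrite (minn_idPr h); lia.
set P := #|{perm T}|.
have step s : minn (pos e v s v) d.+1 =
    (\sum_(j < k.+1) (pos e v s v == j) * minn j d.+1)%N.
  rewrite (bigD1 (Ordinal (hposlt s))) //= eqxx mul1n big1 ?addn0 //.
  move=> j /negbTE hj; case: eqP => [hpj|]; last by rewrite mul0n.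
  by move: hj; rewrite (_ : j = Ordinal (hposlt s)) ?eqxx //; apply: val_inj.
have Hsum : (k.+1 * (\sum_s minn (pos e v s v) d.+1) =
             P * \sum_(j < k.+1) minn j d.+1)%N.
  under eq_bigr do rewrite step.
  rewrite exchange_big /= big_distrr big_distrr /=; apply: eq_bigr => j _.
  rewrite -big_distrl /= mulnA.
  have -> : (\sum_s (pos e v s v == j) = #|[set s : {perm T} | pos e v s v == j]|)%N.
    rewrite -sum1_card [RHS]big_mkcond /=; apply: eq_bigr => s _.
    by rewrite inE; case: (pos e v s v == j).
  have hj : (j < #|W e v|)%N by rewrite hW.
  have hc := count_uniform hj; rewrite hW in hc.
  by rewrite hc.
set A := (\sum_s rcstar_pi R d e v s)%N.
have hAB : (\sum_s minn (pos e v s v) d.+1 <= A)%N by apply: leq_sum => s _.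
have hid := sum_min d (k - d).
have hkd : (d + (k - d))%N = k by lia.
rewrite hkd in hid.
have hnat : (P * k.+1 * d.+1 <= k.+1 * A + P * 'C(d.+2, 2))%N.
  have := leq_mul (leqnn k.+1) hAB; rewrite Hsum => h.
  by rewrite -mulnA -hid mulnDr; lia.
have P0 : (0 < P)%N by apply/card_gt0P; exists 1%g.
rewrite /rcstar -/P -natr_sum -/A.
have hPr : 0 < P%:R :> R by rewrite ltr0n.
have hkr : 0 < k.+1%:R :> R by rewrite ltr0n.
rewrite ler_pdivlMr //.
have hr : (P * k.+1 * d.+1)%:R <= (k.+1 * A + P * 'C(d.+2, 2))%:R :> R by rewrite ler_nat.
move: hr; rewrite natrD !natrM.
set Pr := P%:R; set kr := k.+1%:R; set Ar := A%:R; set Cr := 'C(d.+2, 2)%:R; set dr := d.+1%:R.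
move=> hr.
have hw : kr^-1 * kr = 1 by rewrite mulVf // gt_eqF.
have hw0 : 0 <= kr^-1 by rewrite invr_ge0 ltW.
have := ler_wpM2l hw0 hr.
have e1 : kr^-1 * (Pr * kr * dr) = Pr * dr.
  by rewrite [Pr * kr]mulrC -[kr * Pr * dr]mulrA mulKf // lt0r_neq0.
have e2 : kr^-1 * (kr * Ar + Pr * Cr) = Ar + Cr / kr * Pr.
  rewrite mulrDr mulrA hw mul1r; congr (_ + _).
  by rewrite mulrCA [LHS]mulrC [kr^-1 * Cr]mulrC.
rewrite e1 e2 mulrBl => h.
by rewrite [dr * Pr]mulrC lerBlDr.
Qed.
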